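(* For $K>\hat K^*:=\frac{b\sigma_2}{b-\mu_0}$ let $G_4(K)=(S(K),0,I_2(K),0,R(K))$ be the unique equilibrium of the system below with $S,I_2,R>0$. Then $K\mapsto I_2(K)$ is strictly increasing, $K\mapsto S(K)$ is strictly decreasing, and for all $K>\hat K^*$ $$0<I_2(K)<\frac{\mu_4'-\mu_0}{\alpha_2},\qquad \frac{\mu_2-\mu_4'}{\alpha_2}<S(K)<\frac{\mu_2-\mu_0}{\alpha_2}.$$ Moreover, with $R^{**}=\frac{K}{b}(b-\mu_4')$, as $K\to\infty$, $$R(K)=R^{**}+O(1),\qquad I_2(K)=\frac{\mu_4'-\mu_0}{\alpha_2}+O\!\left(\frac1K\right),\qquad S(K)=\frac{\mu_2-\mu_4'}{\alpha_2}+O\!\left(\frac1K\right).$$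
   Context: Consider, for $t\ge0$, the system $S'=\big(b(1-\tfrac{N}{K})-\alpha_1I_1-\alpha_2I_2-(\beta_1+\beta_2+\alpha_3)I_{12}-\mu_0\big)S$, $I_1'=\big(b(1-\tfrac{N}{K})+\alpha_1S-\eta_1I_{12}-\gamma_1I_2-\mu_1\big)I_1+\beta_1SI_{12}$, $I_2'=\big(b(1-\tfrac{N}{K})+\alpha_2S-\eta_2I_{12}-\gamma_2I_1-\mu_2\big)I_2+\beta_2SI_{12}$, $I_{12}'=\big(b(1-\tfrac{N}{K})+\alpha_3S+\eta_1I_1+\eta_2I_2-\mu_3\big)I_{12}+(\gamma_1+\gamma_2)I_1I_2$, $R'=\big(b(1-\tfrac{N}{K})-\mu_4'\big)R+\rho_1I_1+\rho_2I_2+\rho_3I_{12}$, where $N=S+I_1+I_2+I_{12}+R$. All parameters $b,K,\alpha_i,\beta_i,\gamma_i,\eta_i,\rho_i,\mu_0,\mu_i'$ are positive and $\mu_i=\rho_i+\mu_i'$ for $i=1,2,3$; $K$ is regarded as a varying parameter, the others fixed. Standing assumptions: $b>\mu_0$, $b>\mu_i$ ($i=1,2,3$), $b>\mu_4'$, and $\mu_0<\mu_4'<\mu_j'$ for $j=1,2,3$. Set $\sigma_k=(\mu_k-\mu_0)/\alpha_k$ ($k=1,2,3$), assumed to satisfy $\sigma_1<\sigma_2<\sigma_3$, and $S^{**}=\frac{K}{b}(b-\mu_0)$. *)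

(* Defs.v *)
From Stdlib Require Import Reals Lra.
Open Scope R_scope.

(* Fixed parameters of the model (K is kept separate as the varying parameter). *)
Record params := Params {
  b : R;
  al1 : R; al2 : R; al3 : R;
  be1 : R; be2 : R;
  ga1 : R; ga2 : R;
  et1 : R; et2 : R;
  rho1 : R; rho2 : R; rho3 : R;
  mu0 : R;
  mu1' : R; mu2' : R; mu3' : R; mu4' : R }.

Definition mu1 (p : params) := rho1 p + mu1' p.
Definition mu2 (p : params) := rho2 p + mu2' p.
Definition mu3 (p : params) := rho3 p + mu3' p.

Definition sigma1 (p : params) := (mu1 p - mu0 p) / al1 p.
Definition sigma2 (p : params) := (mu2 p - mu0 p) / al2 p.
Definition sigma3 (p : params) := (mu3 p - mu0 p) / al3 p.

Definition standing (p : params) : Prop :=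
  0 < b p /\ 0 < al1 p /\ 0 < al2 p /\ 0 < al3 p /\ 0 < be1 p /\ 0 < be2 p /\
  0 < ga1 p /\ 0 < ga2 p /\ 0 < et1 p /\ 0 < et2 p /\
  0 < rho1 p /\ 0 < rho2 p /\ 0 < rho3 p /\ 0 < mu0 p /\
  0 < mu1' p /\ 0 < mu2' p /\ 0 < mu3' p /\ 0 < mu4' p /\
  b p > mu0 p /\ b p > mu1 p /\ b p > mu2 p /\ b p > mu3 p /\ b p > mu4' p /\
  mu0 p < mu4' p /\ mu4' p < mu1' p /\ mu4' p < mu2' p /\ mu4' p < mu3' p /\
  sigma1 p < sigma2 p /\ sigma2 p < sigma3 p.

Definition growth (p : params) (K S I1 I2 I12 Rr : R) : R :=
  b p * (1 - (S + I1 + I2 + I12 + Rr) / K).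

Definition fS (p : params) (K S I1 I2 I12 Rr : R) : R :=
  (growth p K S I1 I2 I12 Rr - al1 p * I1 - al2 p * I2
     - (be1 p + be2 p + al3 p) * I12 - mu0 p) * S.
Definition fI1 (p : params) (K S I1 I2 I12 Rr : R) : R :=
  (growth p K S I1 I2 I12 Rr + al1 p * S - et1 p * I12 - ga1 p * I2 - mu1 p) * I1
  + be1 p * S * I12.
Definition fI2 (p : params) (K S I1 I2 I12 Rr : R) : R :=
  (growth p K S I1 I2 I12 Rr + al2 p * S - et2 p * I12 - ga2 p * I1 - mu2 p) * I2
  + be2 p * S * I12.
Definition fI12 (p : params) (K S I1 I2 I12 Rr : R) : R :=
  (growth p K S I1 I2 I12 Rr + al3 p * S + et1 p * I1 + et2 p * I2 - mu3 p) * I12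
  + (ga1 p + ga2 p) * I1 * I2.
Definition fR (p : params) (K S I1 I2 I12 Rr : R) : R :=
  (growth p K S I1 I2 I12 Rr - mu4' p) * Rr
  + rho1 p * I1 + rho2 p * I2 + rho3 p * I12.

Definition equilibrium (p : params) (K S I1 I2 I12 Rr : R) : Prop :=
  fS p K S I1 I2 I12 Rr = 0 /\ fI1 p K S I1 I2 I12 Rr = 0 /\
  fI2 p K S I1 I2 I12 Rr = 0 /\ fI12 p K S I1 I2 I12 Rr = 0 /\
  fR p K S I1 I2 I12 Rr = 0.

Definition isG4 (p : params) (K S I2 Rr : R) : Prop :=
  0 < S /\ 0 < I2 /\ 0 < Rr /\ equilibrium p K S 0 I2 0 Rr.

Definition Khat (p : params) : R := b p * sigma2 p / (b p - mu0 p).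
Definition Rstarstar (p : params) (K : R) : R := K / b p * (b p - mu4' p).

(* Main.v *)
Require Import Defs.
From Stdlib Require Import Reals Lra Psatz.
Open Scope R_scope.

Ltac dstand Hp :=
  unfold standing in Hp;
  destruct Hp as (Hb & Ha1 & Ha2 & Ha3 & Hbe1 & Hbe2 & Hg1 & Hg2 & He1 & He2 &
    Hr1 & Hr2 & Hr3 & Hm0 & Hm1' & Hm2' & Hm3' & Hm4' & Hbm0 & Hbm1 & Hbm2 & Hbm3 &
    Hbm4 & Hm04 & Hm41 & Hm42 & Hm43 & Hs12 & Hs23).

Lemma g4_facts p K S I2 Rr : standing p -> 0 < K -> isG4 p K S I2 Rr ->
  al2 p * S + al2 p * I2 = mu2 p - mu0 p /\
  (mu4' p - (mu0 p + al2 p * I2)) * Rr = rho2 p * I2 /\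
  K * (b p - (mu0 p + al2 p * I2)) = b p * (S + I2 + Rr) /\
  mu0 p + al2 p * I2 < mu4' p.
Proof.
  intros Hp HK (HS & HI & HR & E1 & _ & E3 & _ & E5).
  unfold fS, fI2, fR in *.
  set (g := growth p K S 0 I2 0 Rr) in *.
  assert (Hg : K * g = b p * K - b p * (S + I2 + Rr)).
  { unfold g, growth. field. lra. }
  assert (A1 : g - al1 p * 0 - al2 p * I2 - (be1 p + be2 p + al3 p) * 0 - mu0 p = 0).
  { apply Rmult_integral in E1; destruct E1; [auto|lra]. }
  assert (A2 : g + al2 p * S - et2 p * 0 - ga2 p * 0 - mu2 p = 0).
  { assert (E3' : (g + al2 p * S - et2 p * 0 - ga2 p * 0 - mu2 p) * I2 = 0) by lra.
    apply Rmult_integral in E3'; destruct E3'; [auto|lra]. }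
  assert (Gd : g = mu0 p + al2 p * I2) by lra.
  rewrite <- Gd.
  assert (Hr2 : 0 < rho2 p) by (unfold standing in Hp; tauto).
  split; [lra|]. split; [lra|]. split; [nra|].
  nra.
Qed.

Lemma Kpos p K : standing p -> Khat p < K -> 0 < K.
Proof.
  intros Hp HK. pose proof Hp as Hq. dstand Hq. unfold Khat, sigma2, mu2 in *.
  assert (0 < (rho2 p + mu2' p - mu0 p) / al2 p) by (apply Rdiv_lt_0_compat; unfold mu2 in *; lra).
  assert (0 < b p * ((rho2 p + mu2' p - mu0 p) / al2 p) / (b p - mu0 p)).
  { apply Rdiv_lt_0_compat; [apply Rmult_lt_0_compat|]; lra. }
  lra.
Qed.

Lemma compare p K1 K2 S1 I1 R1 S2 I2 R2 : standing p -> 0 < K1 -> K1 <= K2 ->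
  isG4 p K1 S1 I1 R1 -> isG4 p K2 S2 I2 R2 -> I2 <= I1 ->
  K1 = K2 /\ I2 = I1.
Proof.
  intros Hp HK1 HK H1 H2 Hle.
  pose proof (g4_facts _ _ _ _ _ Hp HK1 H1) as (A1 & B1 & C1 & D1).
  pose proof (g4_facts _ _ _ _ _ Hp (Rlt_le_trans _ _ _ HK1 HK) H2) as (A2 & B2 & C2 & D2).
  pose proof Hp as Hq. dstand Hq.
  assert (Hg : al2 p * I2 <= al2 p * I1) by nra.
  assert (HR : R2 <= R1).
  { assert ((mu4' p - (mu0 p + al2 p * I2)) * R2 <= (mu4' p - (mu0 p + al2 p * I2)) * R1)
      by (destruct H1 as (_&_&?&_); nra).
    nra. }
  assert (HN : S2 + I2 + R2 <= S1 + I1 + R1) by nra.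
  assert (X1 : K1 * (b p - (mu0 p + al2 p * I1)) <= K2 * (b p - (mu0 p + al2 p * I1)))
    by (apply Rmult_le_compat_r; lra).
  assert (X2 : K2 * (b p - (mu0 p + al2 p * I1)) <= K2 * (b p - (mu0 p + al2 p * I2)))
    by (apply Rmult_le_compat_l; lra).
  assert (Heq : K1 * (b p - (mu0 p + al2 p * I1)) = K2 * (b p - (mu0 p + al2 p * I2))) by nra.
  assert (X3 : K1 * (b p - (mu0 p + al2 p * I1)) = K2 * (b p - (mu0 p + al2 p * I1))) by lra.
  assert (K1 = K2).
  { apply Rmult_eq_reg_r with (b p - (mu0 p + al2 p * I1)); lra. }
  subst. split; auto.
  assert (al2 p * I2 = al2 p * I1) by nra. nra.
Qed.

Lemma exists_G4 p K : standing p -> Khat p < K -> exists S I2 Rr, isG4 p K S I2 Rr.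
Proof.
  intros Hp HK. pose proof (Kpos _ _ Hp HK) as HK0.
  pose proof Hp as Hq. dstand Hq.
  assert (Hm2 : mu4' p < mu2 p) by (unfold mu2; lra).
  set (a := al2 p) in *. set (m4 := mu4' p) in *. set (m0 := mu0 p) in *.
  set (m2 := mu2 p) in *. set (bb := b p) in *. set (r2 := rho2 p) in *.
  assert (Hkey0 : K * (bb - m0) * a > bb * (m2 - m0)).
  { unfold Khat, sigma2 in HK. fold a m0 m2 bb in HK.
    apply Rmult_lt_compat_r with (r := (bb - m0) * a) in HK; [|nra].
    replace (bb * ((m2 - m0) / a) / (bb - m0) * ((bb - m0) * a)) with (bb * (m2 - m0))
      in HK by (field; lra). lra. }
  set (f := fun g => bb * ((m2 - m0) * (m4 - g) + r2 * (g - m0)) - K * (bb - g) * a * (m4 - g)).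
  assert (Hc : continuity f).
  { unfold f. reg. }
  destruct (IVT f m0 m4 Hc Hm04) as [g [Hgi Hg]].
  { unfold f. replace (m0 - m0) with 0 by ring. nra. }
  { unfold f. replace (m4 - m4) with 0 by ring.
    assert (0 < bb * (r2 * (m4 - m0))) by (apply Rmult_lt_0_compat; [lra|apply Rmult_lt_0_compat; lra]).
    lra. }
  assert (Hgg1 : m0 < g).
  { destruct (Req_dec g m0) as [E|E]; [|lra]. subst g. unfold f in Hg.
    replace (m0 - m0) with 0 in Hg by ring. nra. }
  assert (Hgg2 : g < m4).
  { destruct (Req_dec g m4) as [E|E]; [|lra]. subst g. unfold f in Hg.
    replace (m4 - m4) with 0 in Hg by ring.
    assert (0 < bb * (r2 * (m4 - m0))) by (apply Rmult_lt_0_compat; [lra|apply Rmult_lt_0_compat; lra]).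
    lra. }
  unfold f in Hg.
  set (I2 := (g - m0) / a). set (S := (m2 - g) / a). set (Rr := r2 * (g - m0) / (a * (m4 - g))).
  assert (Hkey : K * (bb - g) = bb * (S + 0 + I2 + 0 + Rr)).
  { apply Rmult_eq_reg_l with (a * (m4 - g)); [|nra].
    unfold S, I2, Rr. field_simplify; try lra. }
  assert (Hgr : growth p K S 0 I2 0 Rr = g).
  { unfold growth. fold bb. apply Rmult_eq_reg_l with K; [|lra].
    field_simplify; [|lra]. lra. }
  exists S, I2, Rr. unfold isG4, equilibrium, fS, fI1, fI2, fI12, fR.
  rewrite Hgr. fold a m0 m2 m4 r2.
  split; [unfold S; apply Rdiv_lt_0_compat; lra|].
  split; [unfold I2; apply Rdiv_lt_0_compat; lra|].
  split; [unfold Rr; apply Rdiv_lt_0_compat; nra|].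
  unfold S, I2, Rr.
  repeat split; field; lra.
Qed.

Lemma lt_div a x c : 0 < a -> a * x < c -> x < c / a.
Proof. intros Ha H. apply Rmult_lt_reg_l with a; auto.
  replace (a * (c / a)) with c by (field; lra). lra. Qed.
Lemma gt_div a x c : 0 < a -> c < a * x -> c / a < x.
Proof. intros Ha H. apply Rmult_lt_reg_l with a; auto.
  replace (a * (c / a)) with c by (field; lra). lra. Qed.
Lemma le_div a x c : 0 < a -> a * x <= c -> x <= c / a.
Proof. intros Ha H. apply Rmult_le_reg_l with a; auto.
  replace (a * (c / a)) with c by (field; lra). lra. Qed.

Theorem mainTheorem15 (p : params) (Hp : standing p) :
  (forall K, Khat p < K ->
     exists S I2 Rr, isG4 p K S I2 Rr /\
       forall S' I2' Rr', isG4 p K S' I2' Rr' -> S' = S /\ I2' = I2 /\ Rr' = Rr) /\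
  (forall K1 K2 S1 I21 R1 S2 I22 R2,
     Khat p < K1 -> K1 < K2 ->
     isG4 p K1 S1 I21 R1 -> isG4 p K2 S2 I22 R2 ->
     I21 < I22 /\ S2 < S1) /\
  (forall K S I2 Rr, Khat p < K -> isG4 p K S I2 Rr ->
     0 < I2 /\ I2 < (mu4' p - mu0 p) / al2 p /\
     (mu2 p - mu4' p) / al2 p < S /\ S < (mu2 p - mu0 p) / al2 p) /\
  (exists C K0, forall K S I2 Rr, K0 < K -> Khat p < K -> isG4 p K S I2 Rr ->
     Rabs (Rr - Rstarstar p K) <= C /\
     Rabs (I2 - (mu4' p - mu0 p) / al2 p) <= C / K /\
     Rabs (S - (mu2 p - mu4' p) / al2 p) <= C / K).
Proof.
  pose proof Hp as Hq. dstand Hq.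
  assert (Hm2 : mu4' p < mu2 p) by (unfold mu2; lra).
  split; [|split; [|split]].
  - intros K HK. pose proof (Kpos _ _ Hp HK) as HK0.
    destruct (exists_G4 _ _ Hp HK) as (S & I2 & Rr & H).
    exists S, I2, Rr. split; auto.
    intros S' I2' Rr' H'.
    pose proof (g4_facts _ _ _ _ _ Hp HK0 H) as (A1 & B1 & C1 & D1).
    pose proof (g4_facts _ _ _ _ _ Hp HK0 H') as (A2 & B2 & C2 & D2).
    assert (E : I2' = I2).
    { destruct (Rle_lt_dec I2' I2) as [L|L].
      - apply (compare _ _ _ _ _ _ _ _ _ Hp HK0 (Rle_refl K) H H' L).
      - symmetry. apply (compare _ _ _ _ _ _ _ _ _ Hp HK0 (Rle_refl K) H' H); lra. }
    subst I2'.
    assert (S' = S) by nra. subst S'. split; auto. split; auto. nra.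
  - intros K1 K2 S1 I21 R1 S2 I22 R2 HK1 HK H1 H2.
    pose proof (Kpos _ _ Hp HK1) as HK0.
    pose proof (g4_facts _ _ _ _ _ Hp HK0 H1) as (A1 & B1 & C1 & D1).
    pose proof (g4_facts _ _ _ _ _ Hp (Rlt_trans _ _ _ HK0 HK) H2) as (A2 & B2 & C2 & D2).
    assert (I21 < I22).
    { destruct (Rle_lt_dec I22 I21) as [L|L]; auto.
      pose proof (compare _ _ _ _ _ _ _ _ _ Hp HK0 (Rlt_le _ _ HK) H1 H2 L). lra. }
    split; auto. nra.
  - intros K S I2 Rr HK H. pose proof (Kpos _ _ Hp HK) as HK0.
    pose proof (g4_facts _ _ _ _ _ Hp HK0 H) as (A1 & B1 & C1 & D1).
    destruct H as (HS & HI & HR & _).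
    split; auto. split; [apply lt_div; lra|].
    split; [apply gt_div; lra|apply lt_div; nra].
  - set (a := al2 p) in *. set (bb := b p) in *.
    set (s2 := (mu2 p - mu0 p) / a).
    assert (Hs2 : a * s2 = mu2 p - mu0 p) by (unfold s2; field; lra).
    assert (Hs2p : 0 < s2) by (unfold s2; apply Rdiv_lt_0_compat; lra).
    set (D := 2 * bb * rho2 p * (mu4' p - mu0 p) / (a * (bb - mu4' p))).
    assert (HD : D * (a * (bb - mu4' p)) = 2 * bb * rho2 p * (mu4' p - mu0 p))
      by (unfold D; field; lra).
    exists (D / a + D / bb + s2), (2 * bb * s2 / (bb - mu4' p)).
    intros K S I2 Rr HK0 HK H. pose proof (Kpos _ _ Hp HK) as HKp.
    pose proof (g4_facts _ _ _ _ _ Hp HKp H) as (A1 & B1 & C1 & D1).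
    destruct H as (HS & HI & HR & _).
    fold a bb in A1, B1, C1, D1.
    set (d := mu4' p - (mu0 p + a * I2)) in *.
    assert (Hd : 0 < d) by (unfold d; lra).
    assert (HSI : S + I2 = s2) by nra.
    assert (HK2 : K * (bb - mu4' p) > 2 * bb * s2).
    { apply Rmult_lt_compat_r with (r := bb - mu4' p) in HK0; [|lra].
      replace (2 * bb * s2 / (bb - mu4' p) * (bb - mu4' p)) with (2 * bb * s2) in HK0
        by (field; lra). lra. }
    assert (HbR : bb * Rr >= K * (bb - mu4' p) / 2).
    { assert (bb * Rr = K * (bb - mu4' p) + K * d - bb * s2).
      { replace (K * (bb - mu4' p) + K * d) with (K * (bb - (mu0 p + a * I2))) by (unfold d; ring).
        rewrite C1, <- HSI. ring. }
      assert (0 < K * d) by nra. lra. }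
    assert (HaI : a * I2 < mu4' p - mu0 p) by (unfold d in *; lra).
    assert (HdK : d * K <= D).
    { assert (d * (bb * Rr) = bb * (rho2 p * I2)) by (rewrite <- B1; ring).
      assert (d * (K * (bb - mu4' p) / 2) <= bb * (rho2 p * I2)) by nra.
      assert (a * (bb * (rho2 p * I2)) <= bb * rho2 p * (mu4' p - mu0 p)).
      { replace (a * (bb * (rho2 p * I2))) with ((bb * rho2 p) * (a * I2)) by ring.
        apply Rmult_le_compat_l; [|lra]. left; apply Rmult_lt_0_compat; lra. }
      assert (Hfin : d * K * (a * (bb - mu4' p)) <= D * (a * (bb - mu4' p))).
      { rewrite HD. nra. }
      apply Rmult_le_reg_r with (a * (bb - mu4' p)); [nra|exact Hfin]. }
    assert (Eq1 : I2 - (mu4' p - mu0 p) / a = - (d / a)) by (unfold d; field; lra).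
    assert (Eq2 : S - (mu2 p - mu4' p) / a = d / a).
    { unfold d. apply Rmult_eq_reg_l with a; [|lra]. field_simplify; try lra. }
    assert (Eq3 : Rr - Rstarstar p K = K * d / bb - s2).
    { unfold Rstarstar. fold bb. apply Rmult_eq_reg_l with bb; [|lra].
      field_simplify; try lra. unfold d in *. nra. }
    assert (Hda : d / a <= (D / a + D / bb + s2) / K).
    { apply le_div; auto.
      assert (K * (d / a) <= D / a).
      { replace (K * (d / a)) with ((d * K) / a) by (field; lra).
        apply Rmult_le_compat_r; [left; apply Rinv_0_lt_compat; lra|lra]. }
      assert (0 < D / bb) by (apply Rdiv_lt_0_compat; [|lra]; nra).
      lra. }
    assert (0 < d / a) by (apply Rdiv_lt_0_compat; lra).
    rewrite Eq1, Eq2, Eq3.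
    split; [|split]; apply Rabs_le.
    + assert (0 <= K * d / bb <= D / bb).
      { split. { left; apply Rdiv_lt_0_compat; nra. }
        replace (K * d) with (d * K) by ring.
        apply Rmult_le_compat_r; [left; apply Rinv_0_lt_compat; lra|lra]. }
      assert (0 <= D / a).
      { left; apply Rdiv_lt_0_compat; [|lra]. unfold D. apply Rdiv_lt_0_compat.
        - apply Rmult_lt_0_compat; [|lra]. apply Rmult_lt_0_compat; [lra|]. lra.
        - apply Rmult_lt_0_compat; lra. }
      lra.
    + lra.
    + lra.
Qed.
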